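(* Let $d\ge2$, $j\in[d-1]$, $j\le k\le d$, $R$ an abelian group, and let $M=(K,C)$ be a copy of $M_{j,k}$ in a simplicial complex $\mathcal G$ on $[n]$. Let $f$ be a $j$-cochain of $\mathcal G$ with coefficients in $R$ whose support is contained in the flower $\mathcal F(K,C)$. Then: (i) $f$ is a $j$-cocycle if and only if $f=f_{M,r}$ for some $r\in R$; (ii) if there exist $w\in K\setminus C$ and $a\in[n]\setminus K$ such that $(K,C,w,a)$ is a copy of $\hat M_{j,k}$ in $\mathcal G$, then $f$ is a $j$-cocycle but not a $j$-coboundary if and only if $f=f_{M,r}$ for some $r\in R\setminus\{0_R\}$.
   Context: Cochains: a $j$-cochain is a function $f$ from ordered $j$-simplices $[v_0,\dots,v_j]$ of $\mathcal G$ to $R$ with $f(\sigma)=-f(\sigma')$ when $\sigma'$ is obtained by swapping two vertices; its support is the set of unordered $j$-simplices with nonzero value. The coboundary is $(\delta^jf)([v_0,\dots,v_{j+1}])=\sum_{i=0}^{j+1}(-1)^if([v_0,\dots,\hat v_i,\dots,v_{j+1}])$; $j$-cocycles are elements of $\ker\delta^j$, $j$-coboundaries elements of $\operatorname{im}\delta^{j-1}$. Flowers: for a $k$-simplex $K$ and $C\subset K$ with $|C|=j$, $\mathcal F(K,C)=\{C\cup\{w\}\mid w\in K\setminus C\}$ (its elements are petals). A $(j+2)$-set is a $j$-shell if all its $(j+1)$-subsets are $j$-simplices. Copies: for $j+1\le k\le d$, $(K,C)$ is a copy of $M_{j,k}$ if $K$ is a $k$-simplex of $\mathcal G$ and $C\subset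 K$, $|C|=j$, such that every simplex of $\mathcal G$ containing a petal of $\mathcal F(K,C)$ is contained in $K$; $(K,C)$ is a copy of $M_{j,j}$ if $K$ is an isolated $j$-simplex (in no other simplex of $\mathcal G$) and $C$ is the set of first $j$ vertices of $K$ in increasing order. $(K,C,w,a)$ is a copy of $\hat M_{j,k}$ ($j+1\le k\le d$) if $(K,C)$ is a copy of $M_{j,k}$, $w\in K\setminus C$, $a\in[n]\setminus K$ and $C\cup\{w,a\}$ is a $j$-shell; for $k=j$, $(K,C,w,a)$ is a copy of $\hat M_{j,j}$ if $(K,C)$ is a copy of $M_{j,j}$, $w$ is the last vertex of $K$ in increasing order, $a\notin K$ and $K\cup\{a\}$ is a $j$-shell. $f_{M,r}$: let $v_0,\dots,v_{n-1}$ be the ordering of $[n]$ with $C=\{v_0,\dots,v_{j-1}\}$, $K=\{v_0,\dots,v_k\}$, and vertices within $C$, within $K\setminus C$ and within $[n]\setminus K$ in increasing order. For $r\in R$, $f_{M,r}([v_{i_0},\dots,v_{i_j}])$ with $i_0<\dots<i_j$ equals $r$ if $i_s=s$ for $0\le s\le j-1$ and $j\le i_j\le k$, and $0_R$ otherwise, extended to all orderings alternatingly. *)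

(* Defs.v *)
From mathcomp Require Import all_boot all_order all_algebra.
Set Implicit Arguments. Unset Strict Implicit. Unset Printing Implicit Defensive.
Import Order.TTheory GRing.Theory Num.Theory.
Local Open Scope ring_scope.

Section Defs.
Variable n : nat.
Implicit Types (G : {set {set 'I_n}}) (K C S : {set 'I_n}) (s : seq 'I_n).

Definition is_complex G : Prop :=
  [/\ set0 \notin G,
      (forall A B : {set 'I_n}, A \in G -> B \subset A -> B != set0 -> B \in G)
    & (forall v : 'I_n, [set v] \in G)].

Definition is_osimplex G (m : nat) s : bool :=
  [&& size s == m.+1, uniq s & [set x in s] \in G].

Definition del (i : nat) s : seq 'I_n := take i s ++ drop i.+1 s.

Definition swap s (a b : nat) : seq 'I_n :=
  [seq nth p.1 s (if p.2 == a then b else if p.2 == b then a else p.2)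
  | p <- zip s (iota 0 (size s))].

Variable R : zmodType.

Definition is_cochain G (m : nat) (f : seq 'I_n -> R) : Prop :=
  (forall s, ~~ is_osimplex G m s -> f s = 0) /\
  (forall s (a b : nat), is_osimplex G m s -> (a < b < size s)%N ->
     f (swap s a b) = - f s).

Definition coboundary G (m : nat) (f : seq 'I_n -> R) (s : seq 'I_n) : R :=
  if is_osimplex G m.+1 s then \sum_(i < m.+2) f (del i s) *~ ((-1) ^+ i)
  else 0.

Definition is_cocycle G (m : nat) (f : seq 'I_n -> R) : Prop :=
  is_cochain G m f /\ forall s, coboundary G m f s = 0.

(* m-coboundary (m >= 1): image of delta^(m-1) *)
Definition is_coboundary G (m : nat) (f : seq 'I_n -> R) : Prop :=
  exists g, is_cochain G m.-1 g /\ forall s, f s = coboundary G m.-1 g s.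

Definition support_in (f : seq 'I_n -> R) (F : {set {set 'I_n}}) : Prop :=
  forall s, f s != 0 -> [set x in s] \in F.

Definition flower K C : {set {set 'I_n}} := [set C :|: [set w] | w in K :\: C].

Definition shell G (j : nat) S : bool :=
  (#|S| == j.+2) &&
  [forall T : {set 'I_n}, ((T \subset S) && (#|T| == j.+1)) ==> (T \in G)].

Definition copyM G (j k : nat) K C : Prop :=
  ((j < k)%N /\ K \in G /\ #|K| = k.+1 /\ C \subset K /\ #|C| = j /\
    forall P sigma, P \in flower K C -> sigma \in G -> P \subset sigma ->
      sigma \subset K)
  \/
  (k = j /\ K \in G /\ #|K| = j.+1 /\
    (forall sigma, sigma \in G -> K \subset sigma -> sigma = K) /\
    C \subset K /\ #|C| = j /\
    (forall c x, c \in C -> x \in K :\: C -> (c < x)%N)).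

Definition copyMhat G (j k : nat) K C (w a : 'I_n) : Prop :=
  ((j < k)%N /\ copyM G j k K C /\ w \in K :\: C /\ a \notin K /\
    shell G j (C :|: [set w; a]))
  \/
  (k = j /\ copyM G j k K C /\
    w \in K /\ (forall x, x \in K -> (x <= w)%N) /\
    a \notin K /\ shell G j (K :|: [set a])).

(* position of x in the ordering v_0,...,v_{n-1}: C first, then K \ C,
   then [n] \ K, each block in increasing order *)
Definition vpos K C (x : 'I_n) : nat :=
  if x \in C then #|[set y in C | (y < x)%N]|
  else if x \in K then (#|C| + #|[set y in K :\: C | (y < x)%N]|)%N
  else (#|K| + #|[set y in ~: K | (y < x)%N]|)%N.

Definition ninv (l : seq nat) : nat :=
  (\sum_(a < size l) \sum_(b < size l | (a < b)%N) (nth 0 l b < nth 0 l a))%N.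

(* f_{M,r}: on an ordered j-simplex [v_{i_0},...] (in any order), with
   sorted indices i_0 < ... < i_j, value r if i_s = s (s < j) and
   j <= i_j <= k, extended alternatingly (sign of the sorting permutation);
   0 otherwise. *)
Definition fM G (j k : nat) K C (r : R) (s : seq 'I_n) : R :=
  if is_osimplex G j s then
    let l := map (vpos K C) s in
    let ls := sort leq l in
    if [forall t : 'I_j, nth 0 ls t == t] && (j <= nth 0 ls j <= k)%N
    then r *~ ((-1) ^+ ninv l)
    else 0
  else 0.

End Defs.

(* Main.v *)
Require Import Defs.
From mathcomp Require Import all_boot all_order all_algebra perm zify.
Set Implicit Arguments. Unset Strict Implicit. Unset Printing Implicit Defensive.
Import Order.TTheory GRing.Theory Num.Theory.
Arguments del : simpl never.


Fixpoint aswap {T : Type} (i : nat) (s : seq T) : seq T :=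
  match i, s with
  | 0, x :: y :: t => y :: x :: t
  | i'.+1, x :: t => x :: aswap i' t
  | _, _ => s
  end.

Lemma aswap_nil T i : aswap i ([::] : seq T) = [::].
Proof. by case: i. Qed.

Lemma aswapS T i (x : T) s : aswap i.+1 (x :: s) = x :: aswap i s.
Proof. by []. Qed.

Lemma size_aswap T i (s : seq T) : size (aswap i s) = size s.
Proof.
elim: s i => [|x s IH] [|i] //=; first by case: s {IH}.
by rewrite IH.
Qed.

Lemma perm_aswap (T : eqType) i (s : seq T) : perm_eq (aswap i s) s.
Proof.
elim: s i => [|x s IH] [|i] //=.
- case: s {IH} => [|y t] //=. by rewrite (perm_catCA [:: y] [:: x]).
- by rewrite perm_cons.
Qed.

Lemma map_aswap T1 T2 (f : T1 -> T2) i s : map f (aswap i s) = aswap i (map f s).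
Proof.
elim: s i => [|x s IH] [|i] //=; first by case: s {IH}.
by rewrite IH.
Qed.

Lemma nth_aswap T (x0 : T) i s p : i.+1 < size s ->
  nth x0 (aswap i s) p = nth x0 s (if p == i then i.+1 else if p == i.+1 then i else p).
Proof.
elim: s i p => [|x s IH] [|i] p //= H.
- move: H; case: s {IH} => [|y t] //= _. by case: p => [|[|p]].
- case: p => [|p] /=. done.
  rewrite IH // !eqSS. by case: (p == i); case: (p == i.+1).
Qed.

Lemma del0 n (x : 'I_n) s : del 0 (x :: s) = s.
Proof. by rewrite /del /= drop0. Qed.
Lemma delS n i (x : 'I_n) s : del i.+1 (x :: s) = x :: del i s.
Proof. by []. Qed.

Lemma del_nil n i : del i ([::] : seq 'I_n) = [::].
Proof. by rewrite /del; case: i. Qed.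

Lemma size_del n i (s : seq 'I_n) : i < size s -> size (del i s) = (size s).-1.
Proof.
elim: s i => [|x s IH] [|i] // H; first by rewrite del0.
rewrite delS /= IH //. move: H => /=. case: (size s) => //.
Qed.

Lemma del_del n (t : seq 'I_n) i l : i <= l -> del l (del i t) = del i (del l.+1 t).
Proof.
elim: t i l => [|x t IH] i l; first by rewrite !del_nil.
case: i => [|i] Hil; first by rewrite del0 delS del0.
case: l Hil => [|l] // Hil. by rewrite !delS IH.
Qed.

Lemma del_aswap_lt n (s : seq 'I_n) l i : l < i -> del l (aswap i s) = aswap i.-1 (del l s).
Proof.
elim: s l i => [|x s IH] l i; first by rewrite ?aswap_nil !del_nil ?aswap_nil.
case: i => [|i] //. case: l => [|l] Hl.
- by rewrite del0 /= del0.
- case: i Hl => [|i] // Hl. by rewrite aswapS delS IH.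
Qed.

Lemma del_aswap_gt n (s : seq 'I_n) l i : i.+1 < l -> del l (aswap i s) = aswap i (del l s).
Proof.
elim: s l i => [|x s IH] l i; first by rewrite ?aswap_nil !del_nil ?aswap_nil.
case: l => [|l] // Hl. case: i Hl => [|i] Hl.
- case: s {IH} => [|y t]; first by rewrite delS del_nil.
  by case: l Hl => [|[|l]] // _.
- rewrite aswapS delS. case: l Hl => [|l] // Hl. by rewrite delS aswapS IH.
Qed.

Lemma del_aswap_eq n (s : seq 'I_n) i : i.+1 < size s -> del i (aswap i s) = del i.+1 s.
Proof.
elim: s i => [|x s IH] [|i] //.
- case: s {IH} => [|y t] // _. by rewrite [aswap _ _]/= del0 delS del0.
- move=> H. by rewrite aswapS !delS IH.
Qed.

Lemma del_aswap_eqS n (s : seq 'I_n) i : i.+1 < size s -> del i.+1 (aswap i s) = del i s.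
Proof.
elim: s i => [|x s IH] [|i] //.
- case: s {IH} => [|y t] // _. by rewrite [aswap _ _]/= del0 delS del0.
- move=> H. by rewrite aswapS !delS IH.
Qed.

Lemma swap_aswap n (s : seq 'I_n) i : i.+1 < size s -> swap s i i.+1 = aswap i s.
Proof.
case: s => [|x0 s'] // H.
apply: (@eq_from_nth _ x0).
  by rewrite size_map size_zip size_iota minnn size_aswap.
move=> p; rewrite size_map size_zip size_iota minnn => Hp.
rewrite (nth_map (x0,0)) ?size_zip ?size_iota ?minnn //.
rewrite nth_zip ?size_iota // nth_iota // add0n /= nth_aswap //.
apply: set_nth_default.
by case: eqP => [_|_]; [|case: eqP => [_|_]] => //; exact: ltnW.
Qed.

Lemma sum_count (l : seq nat) x :
  (\sum_(b < size l) (nth 0 l b < x))%N = count (fun y => y < x) l.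
Proof.
elim: l => [|y l IH]; first by rewrite big_ord0.
by rewrite /= big_ord_recl /= IH.
Qed.

Lemma ninv_cons x l : ninv (x :: l) = (count (fun y => y < x) l + ninv l)%N.
Proof.
rewrite /ninv /= big_ord_recl /=. congr (_ + _)%N.
  rewrite big_mkcond big_ord_recl /= add0n -sum_count.
  by apply: eq_bigr.
apply: eq_bigr => a _. rewrite big_mkcond big_ord_recl /= add0n [RHS]big_mkcond.
by apply: eq_bigr => b _.
Qed.

Lemma ninv_nil : ninv [::] = 0.
Proof. by rewrite /ninv big_ord0. Qed.

Lemma ninv_aswap l i : i.+1 < size l ->
  (ninv (aswap i l) + (nth 0 l i.+1 < nth 0 l i) = ninv l + (nth 0 l i < nth 0 l i.+1))%N.
Proof.
elim: l i => [|x l IH] [|i] //.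
- case: l {IH} => [|y t] // _. rewrite [aswap _ _]/= !ninv_cons /=.
  lia.
- move=> H. rewrite aswapS !ninv_cons /= ((seq.permP (perm_aswap i l)) (fun y => y < x)).
  rewrite -addnA IH //. by rewrite addnA.
Qed.

Lemma ninv_sorted l : sorted leq l -> ninv l = 0.
Proof.
elim: l => [|x l IH]; first by rewrite ninv_nil.
move=> Hs. rewrite ninv_cons IH ?(path_sorted Hs) // addn0.
apply/eqP; rewrite -leqn0 leqNgt -has_count; apply/hasP => -[y yl].
have : all (leq x) l by apply: (order_path_min leq_trans).
move/allP/(_ y yl). by rewrite leqNgt => /negP.
Qed.

Lemma descent (l : seq nat) : ~~ sorted leq l ->
  exists2 i, i.+1 < size l & nth 0 l i.+1 < nth 0 l i.
Proof.
move=> Hso.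
have : [exists i : 'I_(size l), (i.+1 < size l) && (nth 0 l i.+1 < nth 0 l i)].
  case: existsP => // Hne; exfalso; move/negP: Hso; apply.
  have H : forall i : 'I_(size l), ~~ ((i.+1 < size l) && (nth 0 l i.+1 < nth 0 l i)).
    by move=> i; apply/negP => Hi; apply: Hne; exists i.
  apply/(sortedP 0) => i Hi; have := H (Ordinal (ltnW Hi)).
  by rewrite /= Hi /= -leqNgt.
case/existsP => -[i /= _] /andP [Hi Hd]. by exists i.
Qed.

Lemma sort_ind (T : eqType) (key : T -> nat) (P : seq T -> Prop) :
  (forall s, uniq s -> sorted leq (map key s) -> P s) ->
  (forall s i, uniq s -> i.+1 < size s ->
     nth 0 (map key s) i.+1 < nth 0 (map key s) i -> P (aswap i s) -> P s) ->
  forall s, uniq s -> P s.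
Proof.
move=> Hs Hstep s.
move: {2}(ninv (map key s)) (leqnn (ninv (map key s))) => N.
elim: N s => [|N IH] s Hle Hu.
all: case: (boolP (sorted leq (map key s))) => Hso; first exact: Hs.
all: case: (descent Hso) => i; rewrite size_map => Hi Hd.
all: have := ninv_aswap (l := map key s) (i := i); rewrite size_map => /(_ Hi).
all: rewrite Hd ltnNge (ltnW Hd) /= addn0 addn1 -map_aswap => Heq.
- by move: Hle; rewrite -Heq.
- apply: (Hstep s i Hu Hi Hd). apply: IH; last by rewrite (perm_uniq (perm_aswap i s)).
  by move: Hle; rewrite -Heq.
Qed.

Section Vpos.
Variables (n : nat) (K C : {set 'I_n}).
Hypothesis CK : C \subset K.

Lemma vpos_C x : x \in C -> vpos K C x < #|C|.
Proof.
move=> xC; rewrite /vpos xC. apply: proper_card. apply/properP; split.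
  by apply/subsetP => y; rewrite inE => /andP[].
by exists x => //; rewrite inE ltnn andbF.
Qed.

Lemma card_KC : #|K :\: C| = (#|K| - #|C|)%N.
Proof. by rewrite cardsD (setIidPr CK). Qed.

Lemma card_CK : #|C| <= #|K|.
Proof. exact: subset_leq_card. Qed.

Lemma vpos_KC x : x \in K -> x \notin C -> #|C| <= vpos K C x < #|K|.
Proof.
move=> xK xC; rewrite /vpos (negbTE xC) xK leq_addr /=.
have : #|[set y in K :\: C | y < x]| < #|K :\: C|.
  apply: proper_card. apply/properP; split.
    by apply/subsetP => y; rewrite inE => /andP[].
  by exists x; rewrite !inE ?xK ?xC ?ltnn ?andbF.
by rewrite card_KC ltn_subRL.
Qed.

Lemma vpos_out x : x \notin K -> #|K| <= vpos K C x.
Proof.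
move=> xK; rewrite /vpos (negbTE xK). case: ifP => [xC|_]; last exact: leq_addr.
by move: xK; rewrite (subsetP CK x xC).
Qed.

Lemma vpos_mono (x y : 'I_n) : x < y -> (x \in C) = (y \in C) -> (x \in K) = (y \in K) ->
  vpos K C x < vpos K C y.
Proof.
move=> xy eC eK. rewrite /vpos eC eK.
have key : forall A : {set 'I_n}, x \in A -> y \in A ->
   #|[set z in A | z < x]| < #|[set z in A | z < y]|.
  move=> A xA yA. apply: proper_card. apply/properP; split.
    apply/subsetP => z; rewrite !inE => /andP[-> /= zx]. exact: ltn_trans zx xy.
  by exists x; rewrite !inE ?xA ?xy ?ltnn ?andbF.
case: ifP => yC.
  by apply: key => //; rewrite eC.
case: ifP => yK.
  by rewrite ltn_add2l; apply: key; rewrite !inE ?eC ?eK ?yC ?yK.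
rewrite ltn_add2l. apply: key; rewrite !inE ?eK ?yK //.
Qed.

Lemma vpos_block x y : vpos K C x = vpos K C y ->
  (x \in C) = (y \in C) /\ (x \in K) = (y \in K).
Proof.
move=> Exy.
have bx1 := @vpos_C x; have bx2 := @vpos_KC x; have bx3 := @vpos_out x.
have by1 := @vpos_C y; have by2 := @vpos_KC y; have by3 := @vpos_out y.
have hx := subsetP CK x; have hy := subsetP CK y.
case xC: (x \in C) in bx1 bx2 hx *; case yC: (y \in C) in by1 by2 hy *;
case xK: (x \in K) in bx2 bx3 hx *; case yK: (y \in K) in by2 by3 hy * => //.
all: try (by have := hx erefl); try (by have := hy erefl).
all: try (have := bx1 erefl); try (have := by1 erefl);
     try (have := bx2 erefl erefl); try (have := by2 erefl erefl);
     try (have := bx3 erefl); try (have := by3 erefl); rewrite ?Exy; have := card_CK; lia.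
Qed.

Lemma vpos_inj : injective (vpos K C).
Proof.
move=> x y Exy. case: (vpos_block Exy) => eC eK.
case: (ltngtP x y) => [xy|yx|/val_inj //].
- by have := vpos_mono xy eC eK; rewrite Exy ltnn.
- by have := vpos_mono yx (esym eC) (esym eK); rewrite Exy ltnn.
Qed.

End Vpos.

Section Main.
Variables (n : nat) (G : {set {set 'I_n}}) (K C : {set 'I_n}) (j k : nat).
Hypothesis HG : is_complex G.
Hypothesis KG : K \in G.
Hypothesis CK : C \subset K.
Hypothesis cC : #|C| = j.
Hypothesis cK : #|K| = k.+1.
Hypothesis jk : j <= k.

Lemma sub_G (A B : {set 'I_n}) : A \in G -> B \subset A -> B != set0 -> B \in G.
Proof. by case: HG => _ H _; apply: H. Qed.

Lemma mk_osimplex m s (A : {set 'I_n}) : A \in G -> size s = m.+1 -> uniq s ->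
  {subset s <= A} -> is_osimplex G m s.
Proof.
move=> AG Hs Hu Hsub. rewrite /is_osimplex Hs eqxx Hu /=.
apply: (sub_G AG). apply/subsetP => x; rewrite inE; exact: Hsub.
apply/set0Pn. case: s Hs {Hu Hsub} => [|x s] // _. by exists x; rewrite inE mem_head.
Qed.

Lemma del_subseq i (s : seq 'I_n) : subseq (del i s) s.
Proof.
rewrite /del -{3}(cat_take_drop i s). apply: cat_subseq => //.
have -> : drop i.+1 s = drop 1 (drop i s) by rewrite drop_drop add1n.
exact: drop_subseq.
Qed.

Lemma osimplex_del m s i : is_osimplex G m.+1 s -> i < m.+2 -> is_osimplex G m (del i s).
Proof.
case/and3P => /eqP Hs Hu HsG Hi.
apply: (mk_osimplex HsG).
- by rewrite size_del Hs.
- exact: subseq_uniq (del_subseq i s) Hu.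
- move=> x /(mem_subseq (del_subseq i s)). by rewrite inE.
Qed.

Lemma osimplex_aswap m s i : is_osimplex G m (aswap i s) = is_osimplex G m s.
Proof.
rewrite /is_osimplex size_aswap (perm_uniq (perm_aswap i s)).
have -> : [set x in aswap i s] = [set x in s].
  by apply/setP => x; rewrite !inE (perm_mem (perm_aswap i s)).
by [].
Qed.

Lemma notin_del (x0 : 'I_n) s i : uniq s -> i < size s -> nth x0 s i \notin del i s.
Proof.
move=> Hu Hi. move: Hu. rewrite -{1}(cat_take_drop i s) (drop_nth x0 Hi).
rewrite /del cat_uniq /= mem_cat negb_or => /and4P[_ H1 H2 _].
case/andP: H1 => H1 _. by rewrite negb_or H1 H2.
Qed.

Definition leV (x y : 'I_n) := vpos K C x <= vpos K C y.
Definition Cs := sort leV (enum C).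

Lemma leV_trans : transitive leV.
Proof. by move=> y x z; rewrite /leV; apply: leq_trans. Qed.
Lemma leV_total : total leV.
Proof. by move=> x y; rewrite /leV leq_total. Qed.
Lemma leV_anti : antisymmetric leV.
Proof. move=> x y; rewrite /leV -eqn_leq => /eqP; exact: (vpos_inj CK). Qed.

Lemma Cs_uniq : uniq Cs.
Proof. by rewrite sort_uniq enum_uniq. Qed.
Lemma mem_Cs x : (x \in Cs) = (x \in C).
Proof. by rewrite mem_sort mem_enum. Qed.
Lemma size_Cs : size Cs = j.
Proof. by rewrite size_sort -cardE cC. Qed.
Lemma Cs_sorted : sorted leV Cs.
Proof. exact: (sort_sorted leV_total). Qed.

Lemma map_vpos_Cs : map (vpos K C) Cs = iota 0 j.
Proof.
have Hu : uniq (map (vpos K C) Cs) by rewrite (map_inj_uniq (vpos_inj CK)) Cs_uniq.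
have Hsub : {subset map (vpos K C) Cs <= iota 0 j}.
  move=> v /mapP [x]; rewrite mem_Cs => xC ->. rewrite mem_iota /= -cC. exact: (vpos_C K xC).
have Hsz : size (iota 0 j) <= size (map (vpos K C) Cs).
  by rewrite size_map size_Cs size_iota.
have [_ E] := uniq_min_size Hu Hsub Hsz.
apply: (sorted_eq leq_trans anti_leq).
- by rewrite sorted_map; exact: Cs_sorted.
- exact: iota_sorted.
exact: uniq_perm Hu (iota_uniq 0 j) E.
Qed.

Lemma sorted_eqV s u : uniq s -> uniq u -> sorted leq (map (vpos K C) s) ->
  sorted leV u -> s =i u -> s = u.
Proof.
move=> Hs Hu Hss Hsu Hsu'. apply: (sorted_eq leV_trans leV_anti) => //.
  by rewrite sorted_map in Hss.
exact: uniq_perm.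
Qed.

Lemma vpos_C_lt x w : x \in C -> w \notin C -> leV x w.
Proof.
move=> xC wC. rewrite /leV. apply: ltnW. apply: (leq_trans (vpos_C K xC)).
case wK: (w \in K); first by case/andP: (vpos_KC CK wK wC).
apply: leq_trans (card_CK CK) (vpos_out CK _). by rewrite wK.
Qed.

Lemma sorted_Cs_cat u : all (fun w => w \notin C) u -> sorted leV u ->
  sorted leV (Cs ++ u).
Proof.
move=> Hall Hsu. rewrite (sorted_pairwise leV_trans) pairwise_cat.
rewrite -!(sorted_pairwise leV_trans) Cs_sorted Hsu andbT /=.
rewrite andbT. apply/allrelP => x y; rewrite mem_Cs => xC yu. apply: vpos_C_lt => //.
exact: (allP Hall).
Qed.


Lemma sign_succ (R : zmodType) (r : R) m :
  (r *~ ((-1) ^+ m.+1) = - (r *~ ((-1) ^+ m)))%R.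
Proof. by rewrite exprS mulN1r mulrNz. Qed.

Lemma flowerP P : reflect (exists2 w, w \in K :\: C & P = C :|: [set w]) (P \in flower K C).
Proof. exact: imsetP. Qed.

Lemma uniq_Cs_cat u : uniq u -> all (fun w => w \notin C) u -> uniq (Cs ++ u).
Proof.
move=> Hu Hall. rewrite cat_uniq Cs_uniq Hu andbT /=. apply/hasPn => x xu.
rewrite mem_Cs. exact: (allP Hall).
Qed.

Lemma osimplex_Cs1 w : w \in K :\: C -> is_osimplex G j (Cs ++ [:: w]).
Proof.
rewrite inE => /andP[wC wK]. apply: (mk_osimplex KG).
- by rewrite size_cat size_Cs addn1.
- by apply: uniq_Cs_cat => //=; rewrite wC.
- move=> x; rewrite mem_cat mem_Cs inE => /orP[xC|/eqP->//]. exact: (subsetP CK).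
Qed.

Lemma osimplex_Cs2 w w' : w \in K :\: C -> w' \in K :\: C -> w != w' ->
  is_osimplex G j.+1 (Cs ++ [:: w; w']).
Proof.
rewrite !inE => /andP[wC wK] /andP[wC' wK'] ww. apply: (mk_osimplex KG).
- by rewrite size_cat size_Cs addn2.
- by apply: uniq_Cs_cat => /=; rewrite ?wC ?wC' ?inE ?ww.
- move=> x; rewrite mem_cat mem_Cs !inE => /orP[xC|/orP[/eqP->|/eqP->]] //.
  exact: (subsetP CK).
Qed.

Lemma canon_eq s u : uniq s -> sorted leq (map (vpos K C) s) ->
  uniq (Cs ++ u) -> all (fun w => w \notin C) u -> sorted leV u ->
  [set x in s] = [set x in Cs ++ u] -> s = Cs ++ u.
Proof.
move=> Hs Hss Hu Hall Hsu E. apply: sorted_eqV => //.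
- exact: sorted_Cs_cat Hall Hsu.
- move=> x. have := congr1 (fun A : {set 'I_n} => x \in A) E. by rewrite !inE.
Qed.

Variable R : zmodType.
Implicit Type r : R.

Lemma fM_aswap r s i : is_osimplex G j s -> i.+1 < size s ->
  fM G j k K C r (aswap i s) = (- fM G j k K C r s)%R.
Proof.
move=> Hs Hi. rewrite /fM osimplex_aswap Hs.
have -> : sort leq (map (vpos K C) (aswap i s)) = sort leq (map (vpos K C) s).
  apply/(perm_sortP leq_total leq_trans anti_leq). rewrite perm_map //. exact: perm_aswap.
case: ifP => _; last by rewrite oppr0.
have Hu : uniq (map (vpos K C) s).
  rewrite (map_inj_uniq (vpos_inj CK)). by case/and3P: Hs.
have := ninv_aswap (l := map (vpos K C) s) (i := i); rewrite size_map => /(_ Hi).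
rewrite map_aswap.
have Hi' : i.+1 < size (map (vpos K C) s) by rewrite size_map.
have := nth_uniq 0 (ltnW Hi') Hi' Hu.
rewrite eqn_leq. move: (nth 0 _ i) (nth 0 _ i.+1) => a b.
case: (ltngtP a b) => Hab Hne //=.
- rewrite addn0 addn1 => ->. by rewrite sign_succ.
- rewrite addn0 addn1 => <-. by rewrite sign_succ opprK.
- by move: Hne; rewrite eqn_leq ltnn andbF.
Qed.

Lemma fM_canon r w : w \in K :\: C -> fM G j k K C r (Cs ++ [:: w]) = r.
Proof.
move=> Hw. rewrite /fM osimplex_Cs1 //.
have Hso : sorted leq (map (vpos K C) (Cs ++ [:: w])).
  rewrite sorted_map. apply: sorted_Cs_cat => //=. by move: Hw; rewrite inE => /andP[-> _].
rewrite (sorted_sort leq_trans Hso) ninv_sorted // expr0 mulr1z.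
move: Hw; rewrite inE => /andP[wC wK].
have [H1 H2] := andP (vpos_KC CK wK wC).
rewrite map_cat map_vpos_Cs /=.
have -> : [forall t : 'I_j, nth 0 (iota 0 j ++ [:: vpos K C w]) t == t].
  apply/forallP => t. by rewrite nth_cat size_iota ltn_ord nth_iota // add0n.
rewrite nth_cat size_iota ltnn subnn /= -cC H1 /=.
by move: H2; rewrite cK ltnS => ->.
Qed.

Lemma fM_flower r s : is_osimplex G j s -> sorted leq (map (vpos K C) s) ->
  fM G j k K C r s != 0%R -> [set x in s] \in flower K C.
Proof.
move=> Hs Hso. rewrite /fM Hs (sorted_sort leq_trans Hso).
case: ifP => [/andP[/forallP Ht /andP[Hj1 Hj2]] _|]; last by rewrite eqxx.
case/and3P: Hs => /eqP Hsz Hu _.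
case Es: s Hsz => [|x0 s'] // Hsz. rewrite -Es in Hsz *.
have inC : forall t, t < j -> nth x0 s t \in C.
  move=> t Htj. have := Ht (Ordinal Htj); rewrite (nth_map x0); last by rewrite Hsz ltnS ltnW.
  move=> /eqP /= Ev.
  apply/negPn/negP => tC. case tK: (nth x0 s t \in K).
    by have := vpos_KC CK tK tC; rewrite Ev cC leqNgt Htj.
  have := vpos_out CK (negbT tK). rewrite Ev cK. lia.
have wKC : nth x0 s j \in K :\: C.
  move: Hj1 Hj2; rewrite (nth_map x0) ?Hsz // => Hj1 Hj2.
  rewrite inE; apply/andP; split.
    apply/negP => /(vpos_C K); rewrite cC leqNgt ltnS Hj1 //.
  apply/negP => /negP/(vpos_out CK). rewrite cK leqNgt ltnS Hj2 //.
apply/flowerP; exists (nth x0 s j) => //.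
have Etake : [set x in take j s] = C.
  apply/eqP; rewrite eqEcard; apply/andP; split.
    apply/subsetP => x; rewrite inE => /(nthP x0) [t]; rewrite size_take Hsz ltnSn => Htj <-.
    rewrite nth_take //. exact: inC.
  rewrite cC cardsE. have /card_uniqP -> : uniq (take j s) by apply: take_uniq.
    by rewrite size_take Hsz ltnSn.
have Es2 : s = rcons (take j s) (nth x0 s j).
  by rewrite -take_nth ?Hsz // -Hsz take_size.
apply/setP => x. rewrite inE {1}Es2 mem_rcons in_cons !inE.
have := congr1 (fun A : {set 'I_n} => x \in A) Etake; rewrite inE /= => ->. by rewrite orbC.
Qed.

Lemma canon1 s w : uniq s -> sorted leq (map (vpos K C) s) -> w \in K :\: C ->
  [set x in s] = C :|: [set w] -> s = Cs ++ [:: w].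
Proof.
move=> Hs Hso Hw E. have wC : w \notin C by move: Hw; rewrite inE => /andP[].
apply: canon_eq => //=; rewrite ?wC //.
  by apply: uniq_Cs_cat => //=; rewrite wC.
rewrite E. apply/setP => x. by rewrite !inE mem_cat mem_Cs inE.
Qed.


Lemma f_aswap m (f : seq 'I_n -> R) s i : is_cochain G m f -> is_osimplex G m s ->
  i.+1 < size s -> f (aswap i s) = (- f s)%R.
Proof.
move=> [_ Hf] Hs Hi. rewrite -swap_aswap //. apply: Hf => //. by rewrite ltnSn.
Qed.

Lemma del_Cs_j x y : del j (Cs ++ [:: x; y]) = Cs ++ [:: y].
Proof. by rewrite /del take_cat drop_cat size_Cs ltnn subnn take0 cats0 ltnNge leqnSn subSnn. Qed.

Lemma del_Cs_jS x y : del j.+1 (Cs ++ [:: x; y]) = Cs ++ [:: x].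
Proof.
rewrite /del take_cat drop_cat size_Cs ltnNge leqnSn /= ltnNge (leq_trans (leqnSn j)) //=.
by rewrite subSnn -addn2 addKn cats0.
Qed.

Lemma sum_canon (f : seq 'I_n -> R) x y : support_in f (flower K C) ->
  uniq (Cs ++ [:: x; y]) ->
  (\sum_(i < j.+2) f (del i (Cs ++ [:: x; y])) *~ ((-1) ^+ i))%R =
  (f (Cs ++ [:: y]) *~ ((-1) ^+ j) - f (Cs ++ [:: x]) *~ ((-1) ^+ j))%R.
Proof.
move=> Hsupp Hu. rewrite big_ord_recr big_ord_recr /=.
rewrite big1 ?add0r.
  by rewrite del_Cs_j del_Cs_jS sign_succ.
move=> i _ /=. suff -> : f (del i (Cs ++ [:: x; y])) = 0%R by rewrite mul0rz.
apply/eqP/negPn/negP => Hne.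
case/flowerP: (Hsupp _ Hne) => w _ E.
have Hi : i < size (Cs ++ [:: x; y]) by rewrite size_cat size_Cs; apply: (leq_trans (ltn_ord i)); rewrite leq_addr.
have := notin_del x Hu Hi.
have : nth x (Cs ++ [:: x; y]) i \in C.
  by rewrite nth_cat size_Cs ltn_ord -mem_Cs mem_nth // size_Cs.
move=> Hc. have : nth x (Cs ++ [:: x; y]) i \in [set z in del i (Cs ++ [:: x; y])].
  by rewrite E inE Hc.
by rewrite inE => ->.
Qed.

Lemma cob_canon (f : seq 'I_n -> R) x y : support_in f (flower K C) ->
  is_osimplex G j.+1 (Cs ++ [:: x; y]) ->
  coboundary G j f (Cs ++ [:: x; y]) =
  (f (Cs ++ [:: y]) *~ ((-1) ^+ j) - f (Cs ++ [:: x]) *~ ((-1) ^+ j))%R.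
Proof.
move=> Hsupp Hs. rewrite /coboundary Hs. apply: sum_canon => //.
by case/and3P: Hs.
Qed.

Lemma cob_aswap (f : seq 'I_n -> R) s i : is_cochain G j f -> is_osimplex G j.+1 s ->
  i.+1 < size s -> coboundary G j f (aswap i s) = (- coboundary G j f s)%R.
Proof.
move=> Hf Hs Hi. rewrite /coboundary osimplex_aswap Hs.
have Hsz : size s = j.+2 by case/and3P: Hs => /eqP.
rewrite Hsz in Hi.
pose a : 'I_j.+2 := Ordinal (ltnW Hi). pose b : 'I_j.+2 := Ordinal Hi.
rewrite (reindex_inj (@perm_inj _ (tperm a b))) /= -sumrN.
apply: eq_bigr => l _.
case: (eqVneq l a) => [->|la]; first by rewrite tpermL /= del_aswap_eqS ?Hsz // sign_succ.
case: (eqVneq l b) => [->|lb]; first by rewrite tpermR /= del_aswap_eq ?Hsz // sign_succ opprK.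
rewrite tpermD 1?eq_sym //.
have Hl := ltn_ord l.
have Hds := osimplex_del Hs Hl.
have Hdsz : size (del l s) = j.+1 by rewrite size_del Hsz.
have la' : val l != i by apply: contra la => /eqP E; apply/eqP/val_inj.
have lb' : val l != i.+1 by apply: contra lb => /eqP E; apply/eqP/val_inj.
case: (ltngtP l i) => Hli.
- rewrite del_aswap_lt // (f_aswap Hf Hds) ?mulNrz //.
  rewrite Hdsz prednK; [lia | exact: leq_ltn_trans (leq0n l) Hli].
- move: Hli; rewrite leq_eqVlt eq_sym (negbTE lb') /= => Hli.
  rewrite del_aswap_gt // (f_aswap Hf Hds) ?mulNrz //.
  rewrite Hdsz. lia.
- by exfalso; move/negP: la'; apply; apply/eqP.
Qed.


Definition phi m (p : 'I_m.+2 * 'I_m.+1) : 'I_m.+2 * 'I_m.+1 :=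
  if p.1 <= p.2 then (inord p.2.+1, inord p.1) else (inord p.2, inord p.1.-1).

Lemma phi_le m (p : 'I_m.+2 * 'I_m.+1) : p.1 <= p.2 ->
  val (phi p).1 = p.2.+1 /\ val (phi p).2 = p.1.
Proof.
move=> H; rewrite /phi H /=. have := ltn_ord p.2. have := ltn_ord p.1.
move=> h1 h2. rewrite !inordK //; lia.
Qed.

Lemma phi_gt m (p : 'I_m.+2 * 'I_m.+1) : ~~ (p.1 <= p.2) ->
  val (phi p).1 = p.2 /\ val (phi p).2 = p.1.-1.
Proof.
move=> H; rewrite /phi (negbTE H) /=. have := ltn_ord p.2. have := ltn_ord p.1.
move=> h1 h2. rewrite !inordK //; lia.
Qed.

Lemma phiK m : involutive (@phi m).
Proof.
move=> [a b]. case: (boolP (a <= b)) => H.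
- have [E1 E2] := phi_le (p := (a, b)) H.
  have H' : ~~ ((phi (a, b)).1 <= (phi (a, b)).2) by rewrite E1 E2 /= -ltnNge ltnS.
  have [F1 F2] := phi_gt H'. rewrite E2 in F1. rewrite E1 /= in F2.
  by apply: injective_projections; apply: val_inj.
- have [E1 E2] := phi_gt (p := (a, b)) H.
  have H' : (phi (a, b)).1 <= (phi (a, b)).2.
    rewrite E1 E2 /=. move: H; rewrite -ltnNge. case: (nat_of_ord a) => //.
  have [F1 F2] := phi_le H'. rewrite E2 /= in F1. rewrite E1 /= in F2.
  apply: injective_projections; apply: val_inj => //=. rewrite F1 prednK //.
  move: H; rewrite -ltnNge. case: (nat_of_ord a) => //.
Qed.

Lemma phi_pred m (p : 'I_m.+2 * 'I_m.+1) : ~~ ((phi p).1 <= (phi p).2) = (p.1 <= p.2).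
Proof.
case: (boolP (p.1 <= p.2)) => H.
  have [E1 E2] := phi_le H. by rewrite E1 E2 /= -ltnNge ltnS H.
have [E1 E2] := phi_gt H. rewrite E1 E2 /=. move: H; rewrite -ltnNge.
by case: (nat_of_ord p.1) => //= a; rewrite ltnS => ->.
Qed.

Lemma dd0 (g : seq 'I_n -> R) (t : seq 'I_n) m :
  (\sum_(i < m.+2) (\sum_(l < m.+1) g (del l (del i t)) *~ ((-1) ^+ l)) *~ ((-1) ^+ i))%R = 0%R.
Proof.
under eq_bigr do rewrite mulrz_suml.
rewrite pair_bigA /=.
rewrite (bigID (fun p : 'I_m.+2 * 'I_m.+1 => p.1 <= p.2)) /=.
rewrite [X in (_ + X)%R](reindex_inj (can_inj (@phiK m))) /=.
set S1 := (\sum_(i | _) _)%R.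
suff -> : (\sum_(p : 'I_m.+2 * 'I_m.+1 | ~~ ((phi p).1 <= (phi p).2)%N)
   g (del (phi p).2 (del (phi p).1 t)) *~ (-1) ^+ (phi p).2 *~ (-1) ^+ (phi p).1)%R
   = (- S1)%R by rewrite addrN.
rewrite /S1 -sumrN.
apply: eq_big => p; first exact: phi_pred.
rewrite phi_pred => H. have [E1 E2] := phi_le H. rewrite E1 E2 -del_del //.
by rewrite sign_succ mulrzAC.
Qed.


Lemma sign_inj (x y : R) m : (x *~ ((-1) ^+ m))%R = (y *~ ((-1) ^+ m))%R -> x = y.
Proof.
rewrite -signr_odd. case: (odd m); rewrite ?expr0 ?expr1 ?mulr1z ?mulrN1z //.
exact: oppr_inj.
Qed.

Lemma cocycle_fM (f : seq 'I_n -> R) w0 : w0 \in K :\: C ->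
  is_cocycle G j f -> support_in f (flower K C) ->
  f =1 fM G j k K C (f (Cs ++ [:: w0])).
Proof.
move=> Hw0 [Hf Hcob] Hsupp.
have consist : forall w, w \in K :\: C -> f (Cs ++ [:: w]) = f (Cs ++ [:: w0]).
  move=> w Hw. case: (eqVneq w w0) => [->//|ne].
  have := Hcob (Cs ++ [:: w0; w]).
  rewrite cob_canon //; last by apply: osimplex_Cs2; rewrite // eq_sym.
  move/eqP; rewrite subr_eq0 => /eqP. exact: sign_inj.
move=> s. case: (boolP (is_osimplex G j s)) => Hs; last first.
  by rewrite /fM (negbTE Hs); case: Hf => -> .
have Hu : uniq s by case/and3P: Hs.
move: Hs; apply: (sort_ind (key := vpos K C)
  (P := fun s => is_osimplex G j s -> f s = fM G j k K C (f (Cs ++ [:: w0])) s)) => //.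
- move=> {}s {}Hu Hso Hs. case: (boolP ([set x in s] \in flower K C)) => Hfl.
    case/flowerP: Hfl => w Hw E. rewrite (canon1 Hu Hso Hw E) fM_canon //. exact: consist.
  have -> : f s = 0%R by apply/eqP/negPn/negP => /Hsupp; apply/negP.
  apply/esym/eqP/negPn/negP => /(fM_flower Hs Hso); apply/negP.
  exact: Hfl.
- move=> {}s i {}Hu Hi _ IH Hs.
  have Hs' : is_osimplex G j (aswap i s) by rewrite osimplex_aswap.
  have := IH Hs'. rewrite (f_aswap Hf Hs Hi) fM_aswap //. exact: oppr_inj.
Qed.


Hypothesis Hpet : forall P sigma, P \in flower K C -> sigma \in G -> P \subset sigma ->
  #|sigma| = j.+2 -> sigma \subset K.

Lemma cob_pair (f : seq 'I_n -> R) r s x y : support_in f (flower K C) ->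
  f =1 fM G j k K C r -> x \in K :\: C -> y \in K :\: C -> x != y ->
  uniq s -> sorted leq (map (vpos K C) s) -> leV x y ->
  [set z in s] = C :|: [set x; y] -> is_osimplex G j.+1 s ->
  coboundary G j f s = 0%R.
Proof.
move=> Hsupp Hff Hx Hy xy Hu Hso Hxy E Hs.
have xC : x \notin C by move: Hx; rewrite inE => /andP[].
have yC : y \notin C by move: Hy; rewrite inE => /andP[].
have Hu2 : uniq (Cs ++ [:: x; y]) by apply: uniq_Cs_cat; rewrite /= ?inE ?xy ?xC ?yC.
have Es : s = Cs ++ [:: x; y].
  apply: canon_eq => //=; rewrite ?xC ?yC ?Hxy //.
  rewrite E. apply/setP => z. by rewrite !inE mem_cat mem_Cs !inE.
rewrite Es cob_canon -?Es // !Hff !fM_canon //. by rewrite subrr.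
Qed.

Lemma fM_cocycle (f : seq 'I_n -> R) r : is_cochain G j f ->
  support_in f (flower K C) -> f =1 fM G j k K C r -> is_cocycle G j f.
Proof.
move=> Hf Hsupp Hff. split => // s.
case: (boolP (is_osimplex G j.+1 s)) => Hs; last by rewrite /coboundary (negbTE Hs).
have Hu : uniq s by case/and3P: Hs.
move: Hs; apply: (sort_ind (key := vpos K C)
  (P := fun s => is_osimplex G j.+1 s -> coboundary G j f s = 0%R)) => //.
- move=> {}s {}Hu Hso Hs.
  case: (boolP [exists l : 'I_j.+2, f (del l s) != 0%R]); last first.
    rewrite negb_exists => /forallP Hall. rewrite /coboundary Hs big1 // => l _.
    by have := Hall l; rewrite negbK => /eqP ->; rewrite mul0rz.
  case/existsP => l /Hsupp /flowerP [w Hw E].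
  have Hsz : size s = j.+2 by case/and3P: Hs => /eqP.
  set S := [set z in s].
  have SG : S \in G by case/and3P: Hs.
  have cS : #|S| = j.+2 by rewrite cardsE; move/card_uniqP: Hu => ->.
  have PS : C :|: [set w] \subset S.
    rewrite -E. apply/subsetP => z; rewrite !inE. exact: (mem_subseq (del_subseq l s)).
  have wC : w \notin C by move: Hw; rewrite inE => /andP[].
  have cP : #|C :|: [set w]| = j.+1 by rewrite setUC cardsU1 wC cC.
  have SK : S \subset K.
    apply: (Hpet _ SG PS cS). apply/flowerP; by exists w.
  have : #|S :\: (C :|: [set w])| == 1.
    by rewrite cardsD (setIidPr PS) cS cP subSnn.
  case/cards1P => w' Ew'.
  have w'S : w' \in S :\: (C :|: [set w]) by rewrite Ew' set11.
  move: (w'S); rewrite !inE negb_or => /andP[/andP[w'C w'w] w's].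
  have Hw' : w' \in K :\: C.
    by rewrite inE w'C /=; apply: (subsetP SK); rewrite inE.
  have ES : S = C :|: [set w; w'].
    apply/setP => z. have HP := subsetP PS z.
    move: HP (congr1 (fun A : {set 'I_n} => z \in A) Ew'). rewrite /S !inE /=.
    by case: (z \in C); case: (z == w); case: (z \in s); case: (z == w') => //= ->.
  case: (boolP (leV w w')) => Hle.
    apply: (cob_pair Hsupp Hff Hw Hw' _ Hu Hso Hle ES Hs). by rewrite eq_sym.
  apply: (cob_pair Hsupp Hff Hw' Hw w'w Hu Hso _ _ Hs).
    by move: Hle; rewrite /leV -ltnNge => /ltnW.
  rewrite -[[set z in s]]/S ES; apply/setP => z; rewrite !inE; by case: (z == w); case: (z == w'); rewrite ?orbT ?orbF.
- move=> {}s i {}Hu Hi _ IH Hs.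
  have Hs' : is_osimplex G j.+1 (aswap i s) by rewrite osimplex_aswap.
  have := IH Hs'. rewrite (cob_aswap Hf Hs Hi) => /eqP. rewrite oppr_eq0. by move/eqP.
Qed.


Lemma dd_sum (g : seq 'I_n -> R) t m :
  (forall i : 'I_m.+3, is_osimplex G m.+1 (del i t)) ->
  (\sum_(i < m.+3) coboundary G m g (del i t) *~ ((-1) ^+ i))%R = 0%R.
Proof.
move=> H. rewrite -[RHS](dd0 g t m.+1). apply: eq_bigr => i _. by rewrite /coboundary H.
Qed.

Lemma not_cob (f : seq 'I_n -> R) r w a : support_in f (flower K C) ->
  f =1 fM G j k K C r -> r != 0%R -> 0 < j -> w \in K :\: C -> a \notin K ->
  shell G j (C :|: [set w; a]) -> ~ is_coboundary G j f.
Proof.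
move=> Hsupp Hff r0 j0 Hw aK Hsh [g [_ Hg]].
have wC : w \notin C by move: Hw; rewrite inE => /andP[].
have wK : w \in K by move: Hw; rewrite inE => /andP[].
have aC : a \notin C by apply: contra aK; apply: (subsetP CK).
have wa : w != a by apply: contraNneq aK => <-.
set t := Cs ++ [:: w; a].
have Hu : uniq t by apply: uniq_Cs_cat; rewrite /= ?inE ?wa ?wC ?aC.
have Hst : size t = j.+2 by rewrite size_cat size_Cs addn2.
have Hdel : forall i : 'I_j.+2, is_osimplex G j (del i t).
  move=> i. case/andP: Hsh => _ /forallP Hall.
  have Hu' : uniq (del i t) := subseq_uniq (del_subseq i t) Hu.
  have Hsz : size (del i t) = j.+1 by rewrite size_del Hst.
  rewrite /is_osimplex Hsz eqxx Hu' /=.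
  have := Hall [set z in del i t]. move/implyP; apply. apply/andP; split.
    apply/subsetP => z; rewrite inE => /(mem_subseq (del_subseq i t)).
    by rewrite mem_cat mem_Cs !inE => /orP[->|/orP[->|->]]; rewrite ?orbT.
  by rewrite cardsE; move/card_uniqP: Hu' => ->; rewrite Hsz.
have H0 := @dd_sum g t j.-1. rewrite (prednK j0) in H0.
have := H0 Hdel.
have -> : (\sum_(i < j.+2) coboundary G j.-1 g (del i t) *~ ((-1) ^+ i))%R =
          (\sum_(i < j.+2) f (del i t) *~ ((-1) ^+ i))%R.
  by apply: eq_bigr => i _; rewrite Hg.
rewrite /t sum_canon //.
have -> : f (Cs ++ [:: a]) = 0%R.
  apply/eqP/negPn/negP => /Hsupp /flowerP [w' Hw' E].
  have : a \in [set z in Cs ++ [:: a]] by rewrite inE mem_cat mem_seq1 eqxx orbT.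
  rewrite E !inE => /orP[/(subsetP CK) aK'|/eqP Eaw]; first by rewrite aK' in aK.
  by move: Hw'; rewrite inE -Eaw => /andP[_ aK']; rewrite aK' in aK.
rewrite Hff fM_canon // mul0rz sub0r => /eqP. rewrite oppr_eq0 => /eqP.
move=> Hr. apply: (negP r0); apply/eqP; apply: (@sign_inj _ _ j). by rewrite Hr mul0rz.
Qed.

End Main.

Lemma copyM_facts n (G : {set {set 'I_n}}) j k K C : copyM G j k K C ->
  [/\ K \in G, #|K| = k.+1, C \subset K, #|C| = j &
   forall P sigma, P \in flower K C -> sigma \in G -> P \subset sigma ->
     #|sigma| = j.+2 -> sigma \subset K].
Proof.
case=> [[_ [KG [cK [CK [cC Hpet]]]]]|[kj [KG [cK [Hiso [CK [cC _]]]]]]].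
  by split => // P sigma HP HsG HPs _; apply: Hpet HP HsG HPs.
subst k. split => // P sigma /imsetP [w Hw ->] HsG HPs cs.
have wC : w \notin C by move: Hw; rewrite inE => /andP[].
have wK : w \in K by move: Hw; rewrite inE => /andP[].
have EK : C :|: [set w] = K.
  apply/eqP; rewrite eqEcard cK setUC cardsU1 wC cC leqnn andbT.
  apply/subsetP => x; rewrite !inE => /orP[/eqP->//|]. exact: (subsetP CK).
rewrite EK in HPs. have := Hiso _ HsG HPs => E. move: cs; rewrite E cK. lia.
Qed.

Lemma copyMhat_facts n (G : {set {set 'I_n}}) j k K C w a : copyMhat G j k K C w a ->
  exists w', exists a', [/\ w' \in K :\: C, a' \notin K & shell G j (C :|: [set w'; a'])].
Proof.
case=> [[_ [_ [Hw [aK Hsh]]]]|[kj [HM [wK [wmax [aK Hsh]]]]]].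
  by exists w, a.
subst k. case: HM => [[]|[_ [_ [cK [_ [CK [cC Hord]]]]]]]; first by rewrite ltnn.
have wC : w \notin C.
  apply/negP => wC.
  have : #|K :\: C| != 0 by rewrite cardsD (setIidPr CK) cK cC subSnn.
  rewrite cards_eq0 => /set0Pn [x Hx].
  have := Hord _ _ wC Hx. have := wmax x. move: Hx; rewrite inE => /andP[_ xK].
  move=> /(_ xK). lia.
have EK : C :|: [set w] = K.
  apply/eqP; rewrite eqEcard cK setUC cardsU1 wC cC leqnn andbT.
  apply/subsetP => x; rewrite !inE => /orP[/eqP->//|]. exact: (subsetP CK).
exists w, a; split => //; first by rewrite inE wC.
have -> : C :|: [set w; a] = K :|: [set a].
  by rewrite -EK -setUA; congr (_ :|: _); apply/setP => x; rewrite !inE.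
exact: Hsh.
Qed.

Local Open Scope ring_scope.

Theorem proposition4p8 (n d j k : nat) (R : zmodType)
    (G : {set {set 'I_n}}) (K C : {set 'I_n}) (f : seq 'I_n -> R) :
  is_complex G ->
  (2 <= d)%N -> (1 <= j <= d.-1)%N -> (j <= k <= d)%N ->
  copyM G j k K C ->
  is_cochain G j f ->
  support_in f (flower K C) ->
  (is_cocycle G j f <-> exists r : R, f =1 fM G j k K C r)
  /\
  ((exists w a, copyMhat G j k K C w a) ->
     (is_cocycle G j f /\ ~ is_coboundary G j f <->
      exists r : R, r != 0 /\ f =1 fM G j k K C r)).
Proof.
move=> HG _ /andP[j1 _] /andP[jk _] HM Hf Hsupp.
have [KG cK CK cC Hpet] := copyM_facts HM.
have partI : is_cocycle G j f <-> exists r : R, f =1 fM G j k K C r.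
  split.
    move=> Hcoc.
    have : #|K :\: C| != 0%N by rewrite (card_KC CK) cK cC subn_eq0 -ltnNge ltnS.
    rewrite cards_eq0 => /set0Pn [w0 Hw0].
    exists (f (Cs K C ++ [:: w0])). exact: (cocycle_fM HG KG CK cC cK jk Hw0 Hcoc Hsupp).
  move=> [r Hr]. exact: (fM_cocycle HG KG CK cC cK jk Hpet Hf Hsupp Hr).
split => //.
move=> [w [a /copyMhat_facts [w' [a' [Hw' aK' Hsh]]]]].
split.
  move=> [Hcoc Hncob]. have [r Hr] := partI.1 Hcoc.
  exists r; split => //. apply/eqP => r0; subst r. apply: Hncob.
  exists (fun _ => 0); split; first by split => // s *; rewrite oppr0.
  move=> s. rewrite Hr /fM /coboundary.
  case: ifP => _; last by case: ifP => // _; rewrite big1 // => i _; rewrite mul0rz.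
  case: ifP => _; last by case: ifP => // _; rewrite big1 // => i _; rewrite mul0rz.
  by rewrite mul0rz; case: ifP => // _; rewrite big1 // => i _; rewrite mul0rz.
move=> [r [r0 Hr]]. split; first by apply/partI; exists r.
exact: (not_cob HG KG CK cC cK jk Hsupp Hr r0 j1 Hw' aK' Hsh).
Qed.
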